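(* Let $n\ge 3$, let $A_1\ldots A_n$ be a regular $n$-gon in the coordinate plane with center $O$ of abscissa $o$ and circumradius $R$, and let $f(x)$ be a real polynomial of degree $n$ whose roots, counted with multiplicity, are the abscissas of $A_1,\ldots,A_n$. Consider all circles centered at $O$ that are tangent to some segment $A_iA_j$ ($i\ne j$, sides included) not passing through $O$; these are the circles $\omega_k$ of radius $R\cos(\pi k/n)$, $k=1,\ldots,\lfloor (n-1)/2\rfloor$ (with $\omega_1$ the inscribed circle). Then for each such circle, exactly two of the vertical lines through the roots of $f'$ are tangent to it; that is, $o\pm R\cos(\pi k/n)$ are roots of $f'$ for each $k=1,\ldots,\lfloor (n-1)/2\rfloor$. When $n$ is even, the one remaining root of $f'$ is $o$ (the corresponding vertical line passes through $O$).
   Context: ''Vertical'' means parallel to the ordinate axis. *)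

(* Defs.v *)
From HB Require Import structures.
From mathcomp Require Import all_boot all_order all_algebra.
From mathcomp Require Import all_classical all_reals all_analysis.
Set Implicit Arguments. Unset Strict Implicit. Unset Printing Implicit Defensive.
Import Order.TTheory GRing.Theory Num.Theory.
Local Open Scope ring_scope.

Definition regular_ngon (R : realType) (n : nat) (A : 'I_n -> R * R)
    (O : R * R) (r : R) : Prop :=
  0 < r /\
  exists (t : R) (s : R), (s = 1 \/ s = -1) /\
    forall i : 'I_n,
      A i = (O.1 + r * cos (t + s * (2 * pi * i%:R / n%:R)),
             O.2 + r * sin (t + s * (2 * pi * i%:R / n%:R))).

(* Main.v *)
Require Import Defs.
From HB Require Import structures.
From mathcomp Require Import all_boot all_order all_algebra.
From mathcomp Require Import all_classical all_reals all_analysis.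
From mathcomp Require Import complex polyorder ring lra zify.
Import Order.TTheory GRing.Theory Num.Theory.
Local Open Scope ring_scope.
Section S.
Variable R : realType.
Definition cis (a : R) : R[i] := Complex (cos a) (sin a).
Lemma cisD a b : cis (a + b) = cis a * cis b.
Proof. by rewrite /cis cosD sinD -[RHS]/(mulc _ _) /= (addrC (sin a * cos b)). Qed.
Lemma cis0 : cis 0 = 1.
Proof. by rewrite /cis cos0 sin0. Qed.
Lemma cisX a k : cis a ^+ k = cis (k%:R * a).
Proof. elim: k => [|k IH]; first by rewrite expr0 mul0r cis0.
by rewrite exprS IH -cisD mulrSr mulrDl mul1r addrC. Qed.
Lemma cisNK a : cis a * cis (- a) = 1.
Proof. by rewrite -cisD subrr cis0. Qed.
Lemma cis_neq0 a : cis a != 0.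
Proof. by apply/eqP => h; move: (cisNK a); rewrite h mul0r => /eqP; rewrite eq_sym oner_eq0. Qed.
Lemma cisDN a : cis a + cis (- a) = ((2 * cos a)%:C)%C.
Proof. by rewrite /cis cosN sinN -[LHS]/(addc _ _) /= subrr mulr_natl mulr2n. Qed.
Lemma cis_pair th a : (cis th - cis a) * (cis th - cis (- a)) =
   cis th * ((2 * cos th - 2 * cos a)%:C)%C.
Proof.
rewrite rmorphB /= -!cisDN.
have -> : (cis th - cis a) * (cis th - cis (- a)) =
  cis th * (cis th + cis (- th) - (cis a + cis (- a))) - cis th * cis (- th) + cis a * cis (-a) by ring.
by rewrite !cisNK subrK.
Qed.
Lemma prod_cis n t d w : n.-primitive_root (cis d) ->
  \prod_(i < n) (w - cis (t + i%:R * d)) = w ^+ n - cis (n%:R * t).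
Proof.
move=> pz; have := factor_Xn_sub_1 pz.
move/(congr1 (fun p => p.[w / cis t])).
rewrite horner_prod big_mkord.
under eq_bigr do rewrite hornerXsubC.
rewrite !hornerE => H.
have u0 := cis_neq0 t.
have eq (i : 'I_n) : w - cis (t + i%:R * d) = cis t * (w / cis t - cis d ^+ i).
  by rewrite cisD cisX mulrBr mulrCA divff // mulr1.
rewrite (eq_bigr _ (fun (i : 'I_n) _ => eq i)) big_split /= prodr_const card_ord H.
by rewrite -cisX mulrBr mulr1 -exprMn mulrCA divff // mulr1.
Qed.
Lemma in_0pi (x : R) : 0 <= x <= pi -> x \in `[0, pi].
Proof. by move=> h; rewrite in_itv /=. Qed.
Lemma cos_ne1 (x : R) : 0 < x < pi *+ 2 -> cos x != 1.
Proof.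
move=> /andP[x0 x2]; apply/eqP => c1.
have hp : (0 : R) < pi := pi_gt0 R.
have h0 : (0:R) \in `[0, pi] by rewrite in_itv /=; apply/andP; split; lra.
case: (lerP x pi) => xp.
  have h1 : x \in `[0, pi] by rewrite in_itv /=; apply/andP; split; lra.
  have := @cos_inj R x 0 h1 h0.
  rewrite cos0 c1 => /(_ erefl) h.
  by move: x0; rewrite h ltxx.
have h1 : pi *+ 2 - x \in `[0, pi] by rewrite in_itv /=; apply/andP; split; lra.
have := @cos_inj R (pi *+ 2 - x) 0 h1 h0.
rewrite cos0 -c1 (addrC (pi *+ 2)) cosD2pi cosN => h.
have := h erefl.
lra.
Qed.
Lemma Re_cis a : complex.Re (cis a) = cos a. Proof. by []. Qed.
Lemma prim_cis n s : (0 < n)%N -> (s = 1 \/ s = -1) ->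
  n.-primitive_root (cis (s * (2 * pi / n%:R))).
Proof.
move=> n0 hs.
have nR : (n%:R : R) != 0 by rewrite pnatr_eq0 -lt0n.
have nR0 : (0 : R) < n%:R by rewrite ltr0n.
have hp : (0 : R) < pi := pi_gt0 R.
have zn : cis (s * (2 * pi / n%:R)) ^+ n = 1.
  rewrite cisX.
  have -> : n%:R * (s * (2 * pi / n%:R)) = s * (pi *+ 2).
    by rewrite mulr2n; field.
  by case: hs => ->; rewrite /cis ?mul1r ?mulN1r ?cosN ?sinN cos2pi sin2pi ?oppr0.
have [m pm mn] := prim_order_exists n0 zn.
have m0 := prim_order_gt0 pm.
have mle : (m <= n)%N := dvdn_leq n0 mn.
case: (ltnP m n) => mlt; last first.
  by move: pm; have -> : m = n by apply/eqP; rewrite eqn_leq mle mlt.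
exfalso.
have := prim_expr_order pm; rewrite cisX => /(congr1 (@complex.Re R)); rewrite Re_cis /=.
have -> : m%:R * (s * (2 * pi / n%:R)) = s * ((pi *+ 2) * (m%:R / n%:R)).
  by rewrite mulr2n; field.
have hmn : (m%:R : R) / n%:R < 1 by rewrite ltr_pdivrMr // mul1r ltr_nat.
have hm0 : (0 : R) < m%:R / n%:R by apply: divr_gt0; rewrite ltr0n.
have : (0 < ((pi : R) *+ 2) * (m%:R / n%:R) < (pi : R) *+ 2).
  apply/andP; split; first by apply: mulr_gt0 => //; rewrite pmulrn_lgt0.
  by rewrite gtr_pMr // pmulrn_lgt0.
move/cos_ne1/eqP.
by case: hs => ->; rewrite ?mul1r ?mulN1r ?cosN.
Qed.
Lemma key n t d th : n.-primitive_root (cis d) -> n.-primitive_root (cis (- d)) ->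
  \prod_(i < n) (2 * cos th - 2 * cos (t + i%:R * d)) =
  2 * cos (n%:R * th) - 2 * cos (n%:R * t).
Proof.
move=> p1 p2.
apply: (@complexI R); apply: (mulfI (cis_neq0 (n%:R * th))).
rewrite -cis_pair rmorph_prod /= -cisX.
rewrite -[_ * _]/(GRing.mul (cis th ^+ n) (\prod_(i < n) _)).
rewrite -[in LHS](_ : \prod_(i < n) cis th = cis th ^+ n); last by rewrite prodr_const card_ord.
rewrite -big_split /=.
under eq_bigr do rewrite -cis_pair.
rewrite big_split /= prod_cis //.
have -> : \prod_(i < n) (cis th - cis (- (t + i%:R * d))) = cis th ^+ n - cis (n%:R * (- t)).
  rewrite -(prod_cis _ _ _ _ p2); apply: eq_bigr => i _; congr (_ - cis _); ring.
by rewrite cisX mulrN.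
Qed.
Lemma der_inner (o r th : R) : is_derive th 1 (fun x : R => o + r * cos x) (- (r * sin th)).
Proof.
have -> : (fun x : R => o + r * cos x) = cst o + r \*: cos by apply/funext => x.
have h1 : is_derive th (1:R) (cst o) (0:R) := is_derive_cst _ _ _.
have h2 : is_derive th (1:R) (r \*: (@cos R)) (r *: (- sin th)).
  apply: is_deriveZ; exact: is_derive_cos.
have h := is_deriveD h1 h2.
apply: (is_derive_eq h).
by rewrite add0r /GRing.scale /= mulrN.
Qed.
Lemma deriv_comp_cos (p : {poly R}) o r th :
  derive1 (fun x => p.[o + r * cos x]) th = p^`().[o + r * cos th] * (- (r * sin th)).
Proof.
have -> : (fun x => p.[o + r * cos x]) = horner p \o (fun x => o + r * cos x) by [].
rewrite derive1_comp; last exact: derivable_horner.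
  by rewrite -derivE derive1E; have [_ ->] := der_inner o r th.
by have [] := der_inner o r th.
Qed.
Lemma deriv_G (K C N th : R) :
  derive1 (fun x => K * (2 * cos (N * x) - C)) th = K * (2 * (- sin (N * th))) * N.
Proof.
have -> : (fun x => K * (2 * cos (N * x) - C)) =
   (fun y => K * (2 * cos y - C)) \o (fun x => N * x) by [].
have hin : is_derive th (1:R) (fun x => N * x) N.
  have h := is_deriveZ N (@is_derive_id _ _ th (1:R)).
  by apply: (is_derive_eq h); rewrite /GRing.scale /= mulr1.
have hout : is_derive (N * th) (1:R) (fun y => K * (2 * cos y - C)) (K * (2 * (- sin (N * th)))).
  have -> : (fun y => K * (2 * cos y - C)) = cst (- (K * C)) + (K * 2) \*: (@cos R).
    by apply/funext => y; rewrite !fctE /GRing.scale_fun /GRing.scale /=; ring.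
  have h1 : is_derive (N * th) (1:R) (cst (- (K * C))) (0:R) := is_derive_cst _ _ _.
  have h2 : is_derive (N * th) (1:R) ((K * 2) \*: (@cos R)) ((K * 2) *: (- sin (N * th))).
    apply: is_deriveZ; exact: is_derive_cos.
  have h := is_deriveD h1 h2. apply: (is_derive_eq h).
  by rewrite add0r /GRing.scale /=; ring.
rewrite derive1_comp; last by have [] := hout.
  by rewrite !derive1E; have [_ ->] := hout; have [_ ->] := hin.
by have [] := hin.
Qed.
Lemma sin_nat_pi j : sin (j%:R * pi) = 0 :> R.
Proof.
elim: j => [|j IH]; first by rewrite mul0r sin0.
by rewrite mulrSr mulrDl mul1r sinDpi IH oppr0.
Qed.

Lemma core n (A : 'I_n -> R * R) (O : R * R) (r : R) (f : {poly R}) :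
  (0 < n)%N -> regular_ngon A O r ->
  f = lead_coef f *: \prod_(i < n) ('X - ((A i).1)%:P) ->
  forall j, (0 < j < n)%N -> root f^`() (O.1 + r * cos (pi * j%:R / n%:R)).
Proof.
move=> n0 [r0 [t [s [hs hA]]]] hf j /andP[j0 jn].
have nR : (n%:R : R) != 0 by rewrite pnatr_eq0 -lt0n.
set c := lead_coef f.
set o := O.1.
set d := s * (2 * pi / n%:R).
have p1 : n.-primitive_root (cis d) := prim_cis n s n0 hs.
have p2 : n.-primitive_root (cis (- d)).
  rewrite /d -mulNr; apply: prim_cis => //.
  by case: hs => ->; [right|left]; rewrite ?opprK.
set K := c * (r / 2) ^+ n.
set C := 2 * cos (n%:R * t).
have fval th : f.[o + r * cos th] = K * (2 * cos (n%:R * th) - C).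
  rewrite {1}hf hornerZ horner_prod -(key n t d th p1 p2) /K -mulrA; congr (_ * _).
  rewrite -[(r / 2) ^+ n](_ : \prod_(i < n) (r / 2) = _); last by rewrite prodr_const card_ord.
  rewrite -big_split /=; apply: eq_bigr => i _.
  rewrite hornerXsubC hA /=.
  have -> : s * (2 * pi * i%:R / n%:R) = i%:R * d by rewrite /d; ring.
  by rewrite /o; field.
have D th : f^`().[o + r * cos th] * (- (r * sin th)) =
    K * (2 * (- sin (n%:R * th))) * n%:R.
  rewrite -deriv_comp_cos -(deriv_G K C); congr (derive1 _ th).
  by apply/funext => x; rewrite fval.
have := D (pi * j%:R / n%:R).
have -> : n%:R * (pi * j%:R / n%:R) = j%:R * (pi : R) by field.
rewrite sin_nat_pi oppr0 mulr0 mulr0 mul0r => /eqP.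
rewrite mulf_eq0 oppr_eq0 mulf_eq0 => /orP[/eqP h|/orP[/eqP r00|/eqP s0]].
- by rewrite /root h.
- by move: r0; rewrite r00 ltxx.
- have : 0 < sin ((pi : R) * j%:R / n%:R).
    apply: sin_gt0_pi; apply/andP; split.
      by apply: divr_gt0; [apply: mulr_gt0; [exact: pi_gt0| rewrite ltr0n]| rewrite ltr0n].
    rewrite ltr_pdivrMr ?ltr0n // ltr_pM2l ?ltr_nat //; exact: pi_gt0.
  by rewrite s0 ltxx.
Qed.
End S.

Section R.
Variable T : comPzRingType.
Lemma prod_rev (G : nat -> T) N m : (m <= N)%N ->
  \prod_(1 <= k < m.+1) G (N - k)%N = \prod_(N - m <= j < N) G j.
Proof.
elim: m => [|m IH] hm; first by rewrite big_geq // subn0 big_geq.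
rewrite big_nat_recr //= IH; last by lia.
rewrite (@big_ltn _ _ _ (N - m.+1)); last by lia.
have -> : (N - m.+1).+1 = (N - m)%N by lia.
by rewrite mulrC.
Qed.
Lemma rearr (G : nat -> T) n : (3 <= n)%N ->
  \prod_(1 <= j < n) G j = \prod_(1 <= k < ((n.-1)./2).+1) (G k * G (n - k)%N)
     * (if odd n then 1 else G (n./2)).
Proof.
move=> n3; have := odd_double_half n.
case: (boolP (odd n)) => on e.
  set m := n./2 in e *.
  have hm : (n.-1)./2 = m by rewrite -e /= add0n doubleK.
  rewrite hm mulr1 big_split /= prod_rev; last by lia.
  have -> : (n - m)%N = m.+1 by move: e; rewrite /= add1n; lia.
  by apply: big_cat_nat; move: e; rewrite /= add1n; lia.
set m := n./2 in e *.
have hm : (n.-1)./2 = m.-1.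
  rewrite -e /= add0n; case: m e => [|k] e /=; first by lia.
  by rewrite uphalf_double.
rewrite hm big_split /= prod_rev; last by lia.
have -> : m.-1.+1 = m by lia.
have -> : (n - m.-1)%N = m.+1 by lia.
rewrite (@big_cat_nat _ _ _ m 1 n); [|lia|lia].
rewrite (@big_cat_nat _ _ _ m.+1 m n); [|lia|lia].
by rewrite /= big_nat1 -mulrA [G m * _]mulrC.
Qed.
End R.

Theorem theorem2 (R : realType) (n : nat) (A : 'I_n -> R * R) (O : R * R)
    (r : R) (f : {poly R}) :
  (3 <= n)%N ->
  regular_ngon A O r ->
  size f = n.+1 ->
  f = lead_coef f *: \prod_(i < n) ('X - ((A i).1)%:P) ->
  (forall k : nat, (1 <= k <= (n.-1)./2)%N ->
     root f^`() (O.1 + r * cos (pi * k%:R / n%:R)) /\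
     root f^`() (O.1 - r * cos (pi * k%:R / n%:R))) /\
  (~~ odd n -> root f^`() O.1) /\
  f^`() = (n%:R * lead_coef f) *:
     ((\prod_(1 <= k < ((n.-1)./2).+1)
         (('X - (O.1 + r * cos (pi * k%:R / n%:R))%:P) *
          ('X - (O.1 - r * cos (pi * k%:R / n%:R))%:P)))
      * (if odd n then 1 else 'X - (O.1)%:P)).
Proof.
move=> n3 hreg hsize hf.
have n0 : (0 < n)%N by lia.
have hr := @core R n A O r f n0 hreg hf.
have r0 : 0 < r by case: hreg.
have nR : (n%:R : R) != 0 by rewrite pnatr_eq0 -lt0n.
have hcos k : (k <= n)%N -> cos (pi * (n - k)%N%:R / n%:R) = - cos (pi * k%:R / n%:R) :> R.
  move=> kn; rewrite natrB //.
  rewrite (_ : pi * (n%:R - k%:R) / n%:R = - (pi * k%:R / n%:R) + pi); last by field.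
  by rewrite cosDpi cosN.
have hm : (((n.-1)./2).*2 <= n.-1)%N by rewrite halfK leq_subr.
have hmid : ~~ odd n -> cos (pi * (n./2)%:R / n%:R) = 0 :> R.
  move=> ev; have e := even_halfK ev.
  rewrite (_ : pi * (n./2)%:R / n%:R = pi / 2); first exact: cos_pihalf.
  rewrite -[in n%:R]e -muln2 natrM; field.
  by move: nR; rewrite -[in n%:R]e -muln2 natrM mulf_eq0 negb_or => /andP[].
split.
  move=> k /andP[k1 km]; split.
    by apply: hr; apply/andP; split; lia.
  rewrite -mulrN -hcos; last by lia.
  by apply: hr; apply/andP; split; lia.
split.
  move=> ev; have e := even_halfK ev.
  have := hr n./2 _; rewrite hmid // mulr0 addr0; apply; apply/andP; split; lia.
have sz : size f^`() = n by rewrite size_deriv hsize.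
have lc : lead_coef f^`() = n%:R * lead_coef f.
  rewrite lead_coefE sz coef_deriv prednK // mulr_natl.
  by rewrite lead_coefE hsize.
set rs := [seq O.1 + r * cos (pi * j%:R / n%:R) | j <- index_iota 1 n].
have := @all_roots_prod_XsubC _ f^`() rs.
rewrite size_map size_iota sz.
have -> : (n - 1).+1 = n by lia.
move=> /(_ erefl) ->; first last.
- rewrite uniq_rootsE map_inj_in_uniq ?iota_uniq // => j k hj hk /= /addrI.
  move/(mulfI (lt0r_neq0 r0)).
  rewrite !mem_index_iota in hj hk.
  have hp : (0:R) < pi := pi_gt0 R.
  have hin x : (x <= n)%N -> (pi : R) * x%:R / n%:R \in `[0, (pi:R)].
    move=> xn; rewrite in_itv /=; apply/andP; split.
      by apply: divr_ge0; [apply: mulr_ge0; [exact: ltW| exact: ler0n]| exact: ler0n].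
    have hx : (x%:R : R) <= n%:R by rewrite ler_nat.
    by rewrite ler_pdivrMr ?ltr0n //; nra.
  have [jn kn] : (j <= n /\ k <= n)%N by lia.
  move/(cos_inj (hin _ jn) (hin _ kn)) => e.
  apply/eqP; rewrite -(eqr_nat R); apply/eqP.
  have hp0 : (pi:R) != 0 by rewrite gt_eqF.
  have hn1 : (n%:R : R)^-1 != 0 by rewrite invr_eq0.
  by move: e; rewrite -!mulrA => /(mulfI hp0) /(mulIf hn1).
- by apply/allP => x /mapP [j hj ->]; apply: hr; rewrite mem_index_iota in hj.
rewrite lc big_map; congr (_ *: _).
rewrite rearr //; congr (_ * _).
  apply: eq_big_nat => k /andP[k1 km]; congr (_ * (_ - _)).
  by rewrite hcos ?mulrN //; lia.
by case: ifP => // ev; rewrite hmid ?ev // mulr0 addr0.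
Qed.
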